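(* Let $n$ be such that $n/2$ is odd, let $\Omega\subseteq\mathbb{R}^n$ be open, let $\underline{f}$ be a vector-valued function on $\Omega$ and $\lambda\in\mathbb{C}$. With $A=M^{ie_N}\partial_{\underline{x}}^{-\underline{f}}$ and $B=M^{ie_N}\partial_{\underline{x}}^{\underline{f}}$ acting on $\mathbb{C}_n$-valued functions on $\Omega$, one has (i) $\ker(A\pm\lambda)=\ker\left(\partial_{\underline{x}}-M^{\underline{f}\mp\lambda ie_N}\right)$; (ii) $\ker(B\pm\lambda)=\ker\left(\partial_{\underline{x}}+M^{\underline{f}\pm\lambda ie_N}\right)$.
   Context: $\mathbb{R}_{0,n}$ is the real Clifford algebra generated by an orthonormal basis $e_1,\dots,e_n$ of $\mathbb{R}^n$ with relations $e_je_k+e_ke_j=-2\delta_{jk}$; $\mathbb{C}_n=\mathbb{R}_{0,n}\otimes\mathbb{C}$, with $i$ the complex unit. $e_N=e_1e_2\cdots e_n$ is the pseudo-scalar. The Dirac operator is $\partial_{\underline{x}}=\sum_{j=1}^n e_j\partial_{x_j}$, acting from the left. For a function $f$, $M^f$ is right multiplication: $M^fg=gf$; $\partial_{\underline{x}}^{\pm f}=\partial_{\underline{x}}\pm M^f$. *)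

(* Defs.v *)
From HB Require Import structures.
From mathcomp Require Import all_boot all_order all_algebra.
From mathcomp Require Import all_classical all_reals all_analysis.
From mathcomp Require complex.
Import complex.ComplexField.
Set Implicit Arguments. Unset Strict Implicit. Unset Printing Implicit Defensive.
Import Order.TTheory GRing.Theory Num.Theory.
Import numFieldNormedType.Exports.
Local Open Scope ring_scope.

Section Clifford.
Variables (R : realType) (n : nat).

Definition Cx := complex.complex R.

(* The complex Clifford algebra C_n = R_{0,n} (x) C, in the standard blade
   basis e_A (A a subset of {0..n-1}, e_A = e_{a1}...e_{ak}, a1<...<ak):
   an element is the family of its complex coordinates. *)
Definition Cl := {ffun {set 'I_n} -> Cx}.

Definition blade (A : {set 'I_n}) : Cl := [ffun B => ((B == A)%:R : Cx)].

(* e_A e_B = csign A B e_{A Δ B}, using e_j e_k = - e_k e_j (j<>k), e_j^2 = -1 *)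
Definition csign (A B : {set 'I_n}) : Cx :=
  (-1) ^+ (#|[set p : ('I_n * 'I_n)%type | (p.1 \in A) && (p.2 \in B) && (p.2 < p.1)%N]|
           + #|A :&: B|).

Definition cmul (a b : Cl) : Cl :=
  \sum_(A : {set 'I_n}) \sum_(B : {set 'I_n})
     (csign A B * a A * b B) *: blade ((A :\: B) :|: (B :\: A)).

(* e_j (0-indexed) and the pseudo-scalar e_N = e_1 ... e_n *)
Definition gen (j : 'I_n) : Cl := blade [set j].
Definition eN : Cl := blade [set: 'I_n]%SET.
Definition iC : Cx := complex.Complex 0 1.
Definition ieN : Cl := iC *: eN.

Definition vec (v : 'rV[R]_n) : Cl :=
  \sum_(j < n) (complex.Complex (v 0 j) 0) *: gen j.

Definition Cfun := 'rV[R]_n -> Cl.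

Definition ReC (z : Cx) : R := complex.Re z.
Definition ImC (z : Cx) : R := complex.Im z.

Definition partial (j : 'I_n) (g : Cfun) (x : 'rV[R]_n) : Cl :=
  [ffun A => complex.Complex
     ('D_(delta_mx 0 j) (fun y => ReC (g y A)) x)
     ('D_(delta_mx 0 j) (fun y => ImC (g y A)) x)].

Definition diracOp (g : Cfun) : Cfun :=
  fun x => \sum_(j < n) cmul (gen j) (partial j g x).

Definition rmul (F : Cfun) (g : Cfun) : Cfun := fun x => cmul (g x) (F x).

Definition domain (Omega : set 'rV[R]_n) (g : Cfun) : Prop :=
  forall x, Omega x -> forall A : {set 'I_n},
    differentiable (fun y => ReC (g y A)) x /\
    differentiable (fun y => ImC (g y A)) x.

Definition kerOp (Omega : set 'rV[R]_n) (T : Cfun -> Cfun) : set Cfun :=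
  [set g | domain Omega g /\ forall x, Omega x -> T g x = 0].

Definition addOp (T S : Cfun -> Cfun) : Cfun -> Cfun := fun g x => T g x + S g x.
Definition subOp (T S : Cfun -> Cfun) : Cfun -> Cfun := fun g x => T g x - S g x.
Definition scalOp (l : Cx) : Cfun -> Cfun := fun g x => l *: g x.

Definition vecF (f : 'rV[R]_n -> 'rV[R]_n) : Cfun := fun x => vec (f x).
Definition ieNF : Cfun := fun _ => ieN.
Definition addF (F G : Cfun) : Cfun := fun x => F x + G x.
Definition subF (F G : Cfun) : Cfun := fun x => F x - G x.
Definition scalF (l : Cx) (F : Cfun) : Cfun := fun x => l *: F x.

Definition opA (f : 'rV[R]_n -> 'rV[R]_n) : Cfun -> Cfun :=
  fun g => rmul ieNF (subOp diracOp (rmul (vecF f)) g).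
Definition opB (f : 'rV[R]_n -> 'rV[R]_n) : Cfun -> Cfun :=
  fun g => rmul ieNF (addOp diracOp (rmul (vecF f)) g).

End Clifford.

(* Main.v *)
Require Import Defs.
From HB Require Import structures.
From mathcomp Require Import all_boot all_order all_algebra.
From mathcomp Require Import all_classical all_reals all_analysis.
From mathcomp Require complex.
Import complex.ComplexField.
Import Order.TTheory GRing.Theory Num.Theory.
Local Open Scope ring_scope.
Import numFieldNormedType.Exports.
Lemma par n : ~~ odd n -> odd n./2 -> odd ('C(n, 2) + n)%N.
Proof.
move=> he ho; have := odd_double_half n; rewrite (negbTE he) add0n.
move: ho; set m := n./2 => ho <-.
rewrite bin2 -mul2n -mulnA mul2n doubleK oddD oddM ho /=.
case: m ho => // m _; by rewrite mulnS /= oddM.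
Qed.

Section S.
Variables (R : realType) (n : nat).
Local Notation CL := {ffun {set 'I_n} -> complex.complex R}.
Implicit Types a b c : CL.

Lemma cmulDl a b c : cmul (a + b) c = cmul a c + cmul b c.
Proof.
rewrite /cmul -big_split; apply: eq_bigr => A _.
rewrite -big_split; apply: eq_bigr => B _ /=.
by rewrite ffunE mulrDr mulrDl scalerDl.
Qed.
Lemma cmulZl k a b : cmul (k *: a) b = k *: cmul a b.
Proof.
rewrite /cmul scaler_sumr; apply: eq_bigr => A _.
rewrite scaler_sumr; apply: eq_bigr => B _ /=.
by rewrite ffunE scalerA; congr (_ *: _); rewrite mulrCA !mulrA.
Qed.
Lemma cmulDr a b c : cmul a (b + c) = cmul a b + cmul a c.
Proof.
rewrite /cmul -big_split; apply: eq_bigr => A _.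
rewrite -big_split; apply: eq_bigr => B _ /=.
by rewrite ffunE mulrDr scalerDl.
Qed.
Lemma cmulZr k a b : cmul a (k *: b) = k *: cmul a b.
Proof.
rewrite /cmul scaler_sumr; apply: eq_bigr => A _.
rewrite scaler_sumr; apply: eq_bigr => B _ /=.
by rewrite ffunE scalerA; congr (_ *: _); rewrite mulrCA !mulrA.
Qed.
Lemma cmulNl a b : cmul (- a) b = - cmul a b.
Proof. by rewrite -scaleN1r cmulZl scaleN1r. Qed.
Lemma cmulNr a b : cmul a (- b) = - cmul a b.
Proof. by rewrite -scaleN1r cmulZr scaleN1r. Qed.
Lemma cmulBl a b c : cmul (a - b) c = cmul a c - cmul b c.
Proof. by rewrite cmulDl cmulNl. Qed.
Lemma cmulBr a b c : cmul a (b - c) = cmul a b - cmul a c.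
Proof. by rewrite cmulDr cmulNr. Qed.

Lemma cmul_eN a C : cmul a (eN R n) C = csign R (~: C) [set: 'I_n] * a (~: C).
Proof.
rewrite /cmul sum_ffunE (bigD1 (~: C)) //= [X in _ + X]big1 ?addr0.
  rewrite sum_ffunE (bigD1 [set: 'I_n]%SET) //= big1 ?addr0.
    rewrite !ffunE eqxx /= mulr1 finset.setDT finset.set0U finset.setTD finset.setCK eqxx. by rewrite scaler1.
  by move=> B /negbTE hB; rewrite !ffunE hB /= mulr0 scale0r.
move=> A hA; rewrite sum_ffunE big1 // => B _.
rewrite !ffunE; case: eqP => [->|]; last by rewrite /= mulr0 scale0r.
rewrite finset.setDT finset.set0U finset.setTD /=.
case: eqP => [hC|]; last by rewrite scaler0.
by move: hA; rewrite hC finset.setCK eqxx.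
Qed.
Lemma cardP (A : {set 'I_n}) :
  #|[set p : ('I_n * 'I_n)%type | (p.1 \in A) && (p.2 \in [set: 'I_n]%SET) && (p.2 < p.1)%N]|
  = (\sum_(i in A) (i : nat))%N.
Proof.
rewrite cardsE -sum1_card.
transitivity (\sum_(i in A) \sum_(j | (j \in [set: 'I_n]%SET) && (j < i)%N) 1)%N.
  rewrite pair_big_dep /=; apply: eq_bigl => -[i j] /=.
  by rewrite -topredE /= andbA.
apply: eq_bigr => i _.
under eq_bigl do rewrite finset.in_setT /=.
rewrite -(big_ord_widen_cond n (fun _ => true) (fun _ => 1%N) (ltnW (ltn_ord i))).
by rewrite sum1_card card_ord.
Qed.
Lemma signT (hn_even : ~~ odd n) (hn_half : odd n./2) (C : {set 'I_n}) :
  csign R (~: C) [set: 'I_n] * csign R C [set: 'I_n] = -1.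
Proof.
rewrite /csign -exprD !finset.setIT !cardP addnACA.
rewrite [(#|~: C| + _)%N]addnC finset.cardsC card_ord.
have -> : (\sum_(i in ~: C) (i : nat) + \sum_(i in C) (i : nat) = \sum_(i < n) (i : nat))%N.
  rewrite addnC [RHS](bigID (mem C)) /=; congr addn.
  by apply: eq_bigl => i; rewrite finset.in_setC.
rewrite -(big_mkord xpredT (fun i => i)) bin2_sum.
by rewrite -signr_odd par.
Qed.

Lemma eN2 (hn_even : ~~ odd n) (hn_half : odd n./2) a :
  cmul (cmul a (eN R n)) (eN R n) = - a.
Proof.
apply/ffunP => C; rewrite cmul_eN cmul_eN finset.setCK mulrA signT // ffunE.
by rewrite mulN1r.
Qed.

Lemma iCiC : iC R * iC R = -1.
Proof. apply/eqP; rewrite /iC complex.eq_complex /=. by rewrite !(mul0r, mulr1, mul1r, mulr0, add0r, addr0, oppr0, sub0r) !eqxx. Qed.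

Definition r a := cmul a (ieN R n).
Lemma r2 (hn_even : ~~ odd n) (hn_half : odd n./2) a : r (r a) = a.
Proof.
rewrite /r /ieN !cmulZr cmulZl scalerA iCiC eN2 // scaleN1r opprK //.
Qed.
Lemma key (hn_even : ~~ odd n) (hn_half : odd n./2) (u v : CL) (k : complex.complex R) :
  (r u + k *: v = 0) <-> (u + k *: r v = 0).
Proof.
have r0 : r 0 = 0.
  have := cmulDl 0 0 (ieN R n); rewrite addr0 -/(r 0) => e.
  by have := congr1 (fun z => z - r 0) e; rewrite subrr addrK.
split=> h.
  by move: (congr1 r h); rewrite r0 /r cmulDl cmulZl -/(r u) -/(r (r u)) r2.
by move: (congr1 r h); rewrite r0 /r cmulDl cmulZl -/(r u) -/(r v) -/(r (r v)) r2.
Qed.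

Lemma kerE Om (T S : Cfun R n -> Cfun R n) :
  (forall g x, T g x = 0 <-> S g x = 0) -> kerOp Om T = kerOp Om S.
Proof.
move=> h; apply: funext => g; apply: propext; split=> -[hd hk]; split=> // x hx.
  by apply/h/hk.
by apply/h/hk.
Qed.
End S.
Theorem lemma7p1 (R : realType) (n : nat) (hn_even : ~~ odd n)
  (hn_half : odd n./2) (Omega : set 'rV[R]_n) (hOmega : open Omega)
  (f : 'rV[R]_n -> 'rV[R]_n) (lam : Defs.Cx R) :
  (* (i) *)
  (kerOp Omega (addOp (opA f) (scalOp lam))
     = kerOp Omega (subOp (@diracOp R n) (rmul (subF (vecF f) (scalF lam (@ieNF R n)))))
   /\ kerOp Omega (subOp (opA f) (scalOp lam))
     = kerOp Omega (subOp (@diracOp R n) (rmul (addF (vecF f) (scalF lam (@ieNF R n))))))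
  /\
  (* (ii) *)
  (kerOp Omega (addOp (opB f) (scalOp lam))
     = kerOp Omega (addOp (@diracOp R n) (rmul (addF (vecF f) (scalF lam (@ieNF R n)))))
   /\ kerOp Omega (subOp (opB f) (scalOp lam))
     = kerOp Omega (addOp (@diracOp R n) (rmul (subF (vecF f) (scalF lam (@ieNF R n)))))).
Proof.
split; split; apply: kerE => g x;
rewrite /addOp /subOp /opA /opB /rmul /scalOp /subF /addF /scalF /ieNF /vecF /addOp /subOp.
- rewrite (@key R n hn_even hn_half) cmulBr cmulZr -/(r _ _ _).
  by rewrite opprD opprK addrA; split.
- rewrite -scaleNr (@key R n hn_even hn_half) cmulDr cmulZr -/(r _ _ _).
  by rewrite scaleNr opprD addrA; split.
- rewrite (@key R n hn_even hn_half) cmulDr cmulZr -/(r _ _ _).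
  by rewrite addrA; split.
- rewrite -scaleNr (@key R n hn_even hn_half) cmulBr cmulZr -/(r _ _ _).
  by rewrite scaleNr addrA; split.
Qed.
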